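(* For every input sequence of requests $\sigma$ of the List Update with Time Windows problem, the algorithm ALG described in the context satisfies $$ALG(\sigma)\le 24\cdot OPT(\sigma).$$
   Context: List Update with Time Windows. A set $\mathbb{E}$ of $n$ elements is kept in an ordered list (position $1$ is the head). An input $\sigma$ is a sequence of requests $r_1,\dots,r_m$; request $r_k$ specifies an element $e_k\in\mathbb{E}$, an arrival time $a_k$ and a deadline $q_k\ge a_k$. At any time an algorithm may (a) perform an access up to position $i$, at cost $i$, which serves every pending request (arrived and not yet served) whose element currently lies in positions $1,\dots,i$; (b) swap two adjacent elements of its list at cost $1$. Actions are instantaneous (time does not advance). Every request $r_k$ must be served at some time in $[a_k,q_k]$. The cost of an algorithm on $\sigma$ is the total access cost plus the number of swaps. An online algorithm knows at time $t$ only the requests that have arrived by time $t$. $OPT(\sigma)$ denotes the minimum cost of an (offline) feasible solution; the online algorithm and $OPT$ start from the same initial list. Algorithm ALG: whenever the current time equals the deadline of at least one pending request, let the triggering element be the element at the largest current position among those elements having a pending request whose deadline is the current time, and let $i$ be its position. ALG accesses the first $\min(2i-1,n)$ positions (serving all pending requests for elements in them) and then moves the triggering element to the front of its list by $i-1$ adjacent swaps. *)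

(* Defs.v *)
From HB Require Import structures.
From mathcomp Require Import all_boot all_order all_algebra.
Set Implicit Arguments. Unset Strict Implicit. Unset Printing Implicit Defensive.
Import Order.TTheory GRing.Theory Num.Theory.

Section LUTW.
Variable R : realFieldType.
(* The n elements are 'I_n; a list is a seq of them (head = position 1). *)
Variable n : nat.

Record request := Request { elem : 'I_n; arr : R; dl : R }.

(* Access i : access up to (1-based) position i, cost i.
   Swap j   : swap the elements at 0-based positions j and j+1 (i.e. 1-based
              positions j+1 and j+2), cost 1 (a no-op if out of range). *)
Inductive action := Access of nat | Swap of nat.

Definition swap_adj (j : nat) (L : seq 'I_n) : seq 'I_n :=
  match drop j L with
  | x :: y :: s => take j L ++ y :: x :: s
  | _ => L
  end.

Definition apply_act (L : seq 'I_n) (a : action) : seq 'I_n :=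
  match a with Access _ => L | Swap j => swap_adj j L end.

Definition act_cost (a : action) : nat :=
  match a with Access i => i | Swap _ => 1%N end.

Definition sched := seq (R * action).

Definition sched_cost (S : sched) : nat := \sum_(x <- S) act_cost x.2.

(* the list just before the s-th action (0-based) *)
Definition list_before (L0 : seq 'I_n) (S : sched) (s : nat) : seq 'I_n :=
  foldl apply_act L0 (map snd (take s S)).

Definition pos (L : seq 'I_n) (e : 'I_n) : nat := (index e L).+1.

Definition serves_at (L0 : seq 'I_n) (S : sched) (r : request) (s : nat) : bool :=
  let: (t, a) := nth (0%R, Access 0) S s in
  [&& (arr r <= t)%R, (t <= dl r)%R &
      match a with
      | Access i => pos (list_before L0 S s) (elem r) <= i
      | Swap _ => false
      end].

Definition feasible (L0 : seq 'I_n) (sigma : seq request) (S : sched) : bool :=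
  sorted (fun x y : R => (x <= y)%R) (map fst S) &&
  all (fun r => has (serves_at L0 S r) (iota 0 (size S))) sigma.

Record astate := AState { aL : seq 'I_n; aserved : seq bool; asched : sched }.

Definition alg_step (sigma : seq request) (st : astate) (t : R) : astate :=
  let L := aL st in
  let ps := zip sigma (aserved st) in
  let pend (rb : request * bool) := (arr rb.1 <= t)%R && ~~ rb.2 in
  let trig := [seq rb <- ps | pend rb && (dl rb.1 == t)] in
  if nilp trig then st else
  let i := \max_(rb <- trig) pos L (elem rb.1) in
  let p := minn (2 * i - 1) n in
  let served' := [seq rb.2 || (pend rb && (pos L (elem rb.1) <= p)) | rb <- ps] in
  let mv := [seq Swap j | j <- rev (iota 0 i.-1)] in
  AState (foldl apply_act L mv) served'
         (asched st ++ (t, Access p) :: [seq (t, a) | a <- mv]).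

Definition alg_run (L0 : seq 'I_n) (sigma : seq request) : astate :=
  foldl (alg_step sigma) (AState L0 (nseq (size sigma) false) [::])
        (sort (fun x y : R => (x <= y)%R) (undup (map dl sigma))).

Definition alg_cost (L0 : seq 'I_n) (sigma : seq request) : nat :=
  sched_cost (asched (alg_run L0 sigma)).

End LUTW.

(* Main.v *)
Require Import Defs.
From HB Require Import structures.
From mathcomp Require Import all_boot all_order all_algebra.
Import Order.TTheory GRing.Theory Num.Theory.
From mathcomp Require Import zify.

Module Aux.
Set Implicit Arguments. Unset Strict Implicit. Unset Printing Implicit Defensive.

Section ListLemmas.
Variable T : eqType.

Definition mtf (x : T) (L : seq T) := x :: filter (predC1 x) L.

Lemma filter_index_lt (a : pred T) p q s : a p -> a q ->
  (index p (filter a s) < index q (filter a s)) = (index p s < index q s).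
Proof.
move=> ap aq; elim: s => [|y s IH] //=.
case ay: (a y) => /=.
  by case: (y == p); case: (y == q) => //=; rewrite ltnS.
have yp : y != p by apply: contraFN ay => /eqP ->.
have yq : y != q by apply: contraFN ay => /eqP ->.
by rewrite (negPf yp) (negPf yq) ltnS.
Qed.

Lemma idx_sw2 (y z p q : T) (s : seq T) : index q (z :: y :: s) < index p (z :: y :: s) ->
  (index q (y :: z :: s) < index p (y :: z :: s)) || ((q == z) && (p == y)).
Proof.
rewrite /=.
case: (eqVneq z q) => [e1|zq]; case: (eqVneq y q) => [e2|yq];
case: (eqVneq z p) => [e3|zp]; case: (eqVneq y p) => [e4|yp]; subst;
rewrite ?eqxx //=; lia.
Qed.

Lemma idx_sw (s1 s : seq T) (y z p q : T) :
  index q (s1 ++ z :: y :: s) < index p (s1 ++ z :: y :: s) ->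
  (index q (s1 ++ y :: z :: s) < index p (s1 ++ y :: z :: s)) || ((q == z) && (p == y)).
Proof.
rewrite !index_cat.
case qs: (q \in s1); case ps: (p \in s1) => //.
- by move=> ->.
- move=> _; apply/orP; left. rewrite -index_mem in qs. lia.
- move=> h; rewrite -index_mem in ps. lia.
- rewrite !ltn_add2l; exact: idx_sw2.
Qed.

Lemma idx_mb (s1 s : seq T) (y z w : T) :
  index w (s1 ++ z :: y :: s) <=
  index w (s1 ++ y :: z :: s) + (index w (s1 ++ y :: z :: s) == size s1).
Proof.
rewrite !index_cat.
case ws: (w \in s1); first by rewrite leq_addr.
rewrite /=.
case: (eqVneq z w) => [e1|zw]; case: (eqVneq y w) => [e2|yw]; subst; rewrite ?eqxx /=; lia.
Qed.

Lemma idx_ne_lt (L : seq T) p q : p \in L -> q \in L -> p != q ->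
  (index p L < index q L) || (index q L < index p L).
Proof.
move=> pL qL pq; case: (ltngtP (index p L) (index q L)) => // e.
have := congr1 (nth p L) e; rewrite !nth_index // => epq.
by rewrite epq eqxx in pq.
Qed.

Lemma mtf_idx x (L : seq T) p q :
  (index p (mtf x L) < index q (mtf x L)) =
  ((p == x) && (q != x)) || [&& p != x, q != x & index p L < index q L].
Proof.
rewrite /mtf /=.
case: (eqVneq x p) => [e1|xp]; case: (eqVneq x q) => [e2|xq]; subst; rewrite ?eqxx //=.
by rewrite ltnS filter_index_lt //= eq_sym.
Qed.

Lemma mtf_idx_ge x (L : seq T) y : uniq L -> y != x ->
  index y L <= index y (mtf x L).
Proof.
move=> uL yx; rewrite /mtf /= eq_sym (negPf yx).
elim: L uL => [|a L IH] //= /andP [aL uL].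
case: (eqVneq a y) => [<-|ay] //.
case: (eqVneq a x) => [ax|ax] /=.
  subst a. have -> : [seq x0 <- L | x0 != x] = L.
    apply/all_filterP/allP => b bL; apply/eqP => bx; subst b; by rewrite bL in aL.
  by [].
by rewrite (negPf ay) ltnS IH.
Qed.

End ListLemmas.

Section Perm.
Variable n : nat.
Local Notation E := (seq 'I_n).

Lemma swap_adj_cat (s1 s : E) y z :
  swap_adj (size s1) (s1 ++ y :: z :: s) = s1 ++ z :: y :: s.
Proof. by rewrite /swap_adj drop_size_cat // take_size_cat. Qed.

Lemma mtf_swaps (s : E) x t :
  foldl (@apply_act n) (s ++ x :: t) [seq Swap j | j <- rev (iota 0 (size s))]
  = x :: s ++ t.
Proof.
elim/last_ind: s t => [|s y IH] t //=.
rewrite size_rcons -addn1 iotaD rev_cat /= add0n.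
rewrite cat_rcons /= swap_adj_cat IH.
by rewrite cat_rcons.
Qed.

Lemma take_x_drop (L : E) x : x \in L ->
  L = take (index x L) L ++ x :: drop (index x L).+1 L.
Proof.
move=> xL; rewrite -{1}(cat_take_drop (index x L) L).
by rewrite (drop_nth x) ?index_mem // nth_index.
Qed.

Lemma alg_mv_mtf (L : E) x : uniq L -> x \in L ->
  foldl (@apply_act n) L [seq Swap j | j <- rev (iota 0 (pos L x).-1)] = mtf x L.
Proof.
move=> uL xL.
have HL := take_x_drop xL.
set s1 := take (index x L) L in HL *; set s2 := drop _ L in HL *.
have -> : (pos L x).-1 = size s1 by rewrite /s1 size_take index_mem xL.
rewrite [in LHS]HL mtf_swaps /mtf; congr (_ :: _).
move: uL; rewrite HL => uL.
rewrite filter_cat /= eqxx /=.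
move: uL; rewrite cat_uniq /= => /and3P [u1 /norP [x1 _] /andP [x2 u2]].
congr (_ ++ _); symmetry; apply/all_filterP/allP => b bs /=;
  apply/eqP => e; subst b.
  by rewrite bs in x1.
by rewrite bs in x2.
Qed.

Lemma perm_swap_adj j (L : E) : perm_eq (swap_adj j L) L.
Proof.
rewrite /swap_adj; case e: (drop j L) => [|y [|z s]] //.
rewrite -[in X in perm_eq _ X](cat_take_drop j L) e perm_cat2l.
by rewrite (perm_catCA [:: z] [:: y] s).
Qed.

Lemma perm_apply_act (L : E) a : perm_eq (apply_act L a) L.
Proof. by case: a => [i|j] //=; apply: perm_swap_adj. Qed.

Lemma perm_mtf (L : E) x : uniq L -> x \in L -> perm_eq (mtf x L) L.
Proof.
move=> uL xL; rewrite perm_sym /mtf -rem_filter //; exact: perm_to_rem.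
Qed.

Definition bf (L : E) (p q : 'I_n) := index p L < index q L.
Definition invs (A O : E) :=
  \sum_(p : 'I_n) \sum_(q : 'I_n) (bf A p q && bf O q p : nat).

Lemma perm_enum_mem (L : E) x : perm_eq L (enum 'I_n) -> x \in L.
Proof. by move/perm_mem => ->; rewrite mem_enum. Qed.

Lemma perm_enum_uniq (L : E) : perm_eq L (enum 'I_n) -> uniq L.
Proof. by move/perm_uniq => ->; apply: enum_uniq. Qed.

Lemma perm_enum_size (L : E) : perm_eq L (enum 'I_n) -> size L = n.
Proof. by move/perm_size => ->; rewrite size_enum_ord. Qed.

Lemma sum_mem_card (s : E) : \sum_(q : 'I_n) (q \in s : nat) = #|s|.
Proof. rewrite -sum1_card [RHS]big_mkcond /=; apply: eq_bigr => q _; by case: (q \in s). Qed.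

Lemma count_before (L : E) x : perm_eq L (enum 'I_n) ->
  \sum_(q : 'I_n) (bf L q x : nat) = index x L.
Proof.
move=> pL.
have xL := perm_enum_mem x pL.
transitivity (\sum_(q : 'I_n) (q \in take (index x L) L : nat)).
  by apply: eq_bigr => q _; rewrite /bf in_take // perm_enum_mem.
rewrite sum_mem_card (card_uniqP _) ?size_take ?index_mem ?xL //.
by apply: take_uniq; apply: perm_enum_uniq.
Qed.

Lemma sum_pick (x : 'I_n) (G : 'I_n -> nat) :
  \sum_(q : 'I_n) (q == x) * G q = G x.
Proof.
rewrite (bigD1 x) //= eqxx mul1n big1 ?addn0 // => q /negPf ->; by rewrite mul0n.
Qed.

Lemma inv_refl (L : E) : invs L L = 0.
Proof.
apply: big1 => p _; apply: big1 => q _.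
by rewrite /bf; case: ltngtP.
Qed.

Lemma inv_swap (A O : E) j : uniq O -> invs A (swap_adj j O) <= (invs A O).+1.
Proof.
move=> uO; rewrite /swap_adj; case e: (drop j O) => [|y [|z s]];
  try by apply: leqnSn.
have HO : O = take j O ++ y :: z :: s by rewrite -e cat_take_drop.
have sz : size (take j O) = j.
  by rewrite size_take; case: ltnP => // h; move: e; rewrite drop_oversize.
set s1 := take j O.
rewrite [in X in _ <= X.+1]HO.
apply: (@leq_trans (\sum_(p : 'I_n) \sum_(q : 'I_n)
   ((bf A p q && bf (s1 ++ y :: z :: s) q p : nat) + ((q == z) && (p == y))))).
  apply: leq_sum => p _; apply: leq_sum => q _.
  have := @idx_sw _ s1 s y z p q; rewrite /bf.
  case: (index p A < index q A) => //=.
  case: (index q (s1 ++ z :: y :: s) < _) => //=.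
  by case: (index q (s1 ++ y :: z :: s) < _); case: ((q == z) && (p == y)) => //= /(_ isT).
rewrite -addn1 /invs; apply: eq_leq.
under eq_bigr => p _ do rewrite big_split /=.
rewrite big_split /=; congr (_ + _).
rewrite (bigD1 y) //= [X in _ + X]big1 => [|p /negPf py].
  by rewrite addn0 (bigD1 z) //= !eqxx big1 // => q /negPf ->.
by apply: big1 => q _; rewrite py andbF.
Qed.

Lemma inv_apply (A O : E) a : uniq O ->
  invs A (apply_act O a) <= invs A O + (if a is Swap _ then 1 else 0).
Proof.
case: a => [i|j] uO /=; first by rewrite addn0.
by rewrite addn1; apply: inv_swap.
Qed.

Definition movesback (O : E) (a : action) (z : 'I_n) : bool :=
  if a is Swap j then (index z O == j) && (j.+1 < size O) else false.

Lemma idx_apply (O : E) a z :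
  index z (apply_act O a) <= index z O + movesback O a z.
Proof.
case: a => [i|j] /=; first by rewrite addn0.
rewrite /swap_adj; case e: (drop j O) => [|y [|w s]]; try by rewrite leq_addr.
have HO : O = take j O ++ y :: w :: s by rewrite -e cat_take_drop.
have sz : size (take j O) = j.
  by rewrite size_take; case: ltnP => // h; move: e; rewrite drop_oversize.
have szO : j.+1 < size O by rewrite HO size_cat sz /=; lia.
rewrite szO andbT -{1}sz.
have := @idx_mb _ (take j O) s y w z. by rewrite -HO sz.
Qed.

Lemma movesback_uniq (O : E) a z1 z2 :
  movesback O a z1 -> movesback O a z2 -> z1 = z2.
Proof.
case: a => [//|j] /= /andP [/eqP h1 s1] /andP [/eqP h2 _].
have m1 : z1 \in O by rewrite -index_mem h1 ltnW.
have m2 : z2 \in O by rewrite -index_mem h2 ltnW.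
by rewrite -(nth_index z1 m1) -(nth_index z1 m2) h1 h2.
Qed.

Lemma inv_mtf (A O : E) x : perm_eq A (enum 'I_n) -> perm_eq O (enum 'I_n) ->
  let a := \sum_(q : 'I_n) (bf A q x && bf O q x : nat) in
  let b := \sum_(q : 'I_n) (bf A q x && bf O x q : nat) in
  [/\ invs (mtf x A) O + b = invs A O + a, a + b = index x A & a <= index x O].
Proof.
move=> pA pO a b.
have uA := perm_enum_uniq pA; have uO := perm_enum_uniq pO.
have memA := fun q => perm_enum_mem q pA.
have memO := fun q => perm_enum_mem q pO.
set T := fun L p q => (bf L p q && bf O q p : nat).
have pw : forall p q, T (mtf x A) p q + (q == x) * T A p q + (p == x) * T A p q
                = T A p q + (p == x) * T (mtf x A) p q.
  move=> p q; rewrite /T /bf mtf_idx.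
  case: (eqVneq p x) => [e1|px]; case: (eqVneq q x) => [e2|qx]; subst;
    rewrite ?eqxx ?ltnn /= ?andbF ?mul1n ?mul0n ?addn0 //=.
  by rewrite addnC.
have S1 : \sum_p \sum_q (T (mtf x A) p q + (q == x) * T A p q + (p == x) * T A p q)
   = invs (mtf x A) O + b + \sum_q T A x q.
  rewrite /invs; under eq_bigr => p _ do rewrite !big_split /=.
  rewrite !big_split /=; congr (_ + _ + _).
    apply: eq_bigr => p _; rewrite sum_pick //.
  under eq_bigr => p _ do rewrite -big_distrr /=.
  by rewrite sum_pick.
have S2 : \sum_p \sum_q (T A p q + (p == x) * T (mtf x A) p q)
   = invs A O + \sum_q (bf O q x : nat).
  rewrite /invs; under eq_bigr => p _ do rewrite !big_split /=.
  rewrite big_split /=; congr (_ + _).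
  under eq_bigr => p _ do rewrite -big_distrr /=.
  rewrite sum_pick; apply: eq_bigr => q _; rewrite /T /bf mtf_idx eqxx /=.
  by case: (eqVneq q x) => [->|qx] //=; rewrite ltnn.
have S3 : \sum_q (bf O q x : nat) = \sum_q T A x q + a.
  rewrite -big_split /=; apply: eq_bigr => q _; rewrite /T /bf.
  case: (eqVneq q x) => [->|qx]; first by rewrite ltnn andbF.
  have := idx_ne_lt (memA q) (memA x) qx.
  by case: ltngtP => //= _ _; case: (index q O < _).
split.
- have : invs (mtf x A) O + b + \sum_q T A x q = invs A O + \sum_q T A x q + a.
    by rewrite -S1 (eq_bigr _ (fun p _ => eq_bigr _ (fun q _ => pw p q))) S2 S3 addnA.
  lia.
- rewrite -(count_before x pA) /a /b -big_split /=; apply: eq_bigr => q _.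
  rewrite /bf; case: (eqVneq q x) => [->|qx]; first by rewrite ltnn.
  have := idx_ne_lt (memO q) (memO x) qx.
  by case: ltngtP => //= _ _; case: (index q A < _).
- rewrite -(count_before x pO) /a; apply: leq_sum => q _.
  by case: (bf A q x).
Qed.

End Perm.

Section Group.
Variables (f : nat -> nat) (c : nat -> bool) (J : nat).

Fixpoint lastv m := if m is m'.+1 then (if c m' then f m' else lastv m') else 0.
Definition G x := minn (18 * x) (minn (12 * J + 6 * x) (24 * J)).

Lemma G_step M i : 2 * M <= i -> G M + 12 * minn i J <= G i + (3 * i + 8).
Proof. rewrite /G; lia. Qed.

Lemma lastv_spec m : lastv m = 0 \/ exists2 k0, k0 < m & c k0 /\ lastv m = f k0.
Proof.
elim: m => [|m IH] /=; first by left.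
case ck: (c m); first by right; exists m.
case: IH => [->|[k0 k0m [ck0 ->]]]; first by left.
by right; exists k0 => //; apply: ltnW.
Qed.

Lemma group_bound m :
  (forall k k', k < k' -> k' < m -> c k -> c k' -> 2 * f k <= f k') ->
  \sum_(k < m) (c k) * (12 * minn (f k) J) <=
  \sum_(k < m) (c k) * (3 * f k + 8) + 24 * J.
Proof.
move=> Hd.
suff : forall m', m' <= m -> \sum_(k < m') (c k) * (12 * minn (f k) J) <=
  \sum_(k < m') (c k) * (3 * f k + 8) + G (lastv m').
  move=> /(_ m (leqnn m)) h; apply: (leq_trans h); rewrite leq_add2l /G; lia.
elim=> [|m' IH] lem; first by rewrite !big_ord0 /G; lia.
rewrite !big_ord_recr /=.
have := IH (ltnW lem).
case ck: (c m'); rewrite ?mul1n ?mul0n ?addn0 //.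
have h2 : 2 * lastv m' <= f m'.
  case: (lastv_spec m') => [->|[k0 k0m [ck0 ->]]]; first by [].
  by apply: Hd.
have := @G_step _ _ h2 => hG hI.
apply: leq_trans (leq_add hI (leqnn _)) _.
rewrite -!addnA leq_add2l; move: hG; move: (G (lastv m')) (G (f m')) (minn (f m') J) => g1 g2 d; lia.

Qed.
End Group.

Section InLemmas.
Variable T : Type.

Lemma In_filter (a : pred T) x s : List.In x (filter a s) -> List.In x s /\ a x.
Proof.
elim: s => [|y s IH] //=; case ay: (a y) => /=.
  by case=> [<-|/IH [h1 h2]]; [split; [left|] | split; [right|]].
by move=> /IH [h1 h2]; split; [right|].
Qed.

Lemma In_zip1 (U : Type) (x : T * U) s t : List.In x (zip s t) -> List.In x.1 s.
Proof.
elim: s t => [|y s IH] [|z t] //= [<-|h]; [by left | by right; apply: (IH t)].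
Qed.

Lemma In_map (U : Type) (f : T -> U) y s :
  List.In y (map f s) -> exists x, List.In x s /\ y = f x.
Proof.
elim: s => [|x s IH] //= [<-|/IH [z [h1 h2]]]; first by exists x; split; [left|].
by exists z; split; [right|].
Qed.

Lemma In_all (P : pred T) x s : all P s -> List.In x s -> P x.
Proof. elim: s => [|y s IH] //= /andP [Py Ps] [<-|h] //; exact: IH. Qed.

Lemma all_zip1 (U : Type) (P : pred T) s (t : seq U) :
  all P s -> all (fun x => P x.1) (zip s t).
Proof. elim: s t => [|y s IH] [|z t] //= /andP [Py Ps]; by rewrite Py (IH t Ps). Qed.

Lemma zip_map_zip (U V : Type) (s : seq T) (t : seq U) (g : T * U -> V) :
  size s = size t -> zip s (map g (zip s t)) = map (fun x => (x.1, g x)) (zip s t).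
Proof. elim: s t => [|y s IH] [|z t] //= [e]; by rewrite IH. Qed.

Lemma bigmax_In (F : T -> nat) (s : seq T) : ~~ nilp s ->
  exists x, List.In x s /\ \max_(y <- s) F y = F x.
Proof.
elim: s => [|x s IH] //= _; rewrite big_cons.
case: s IH => [|y s] IH; first by exists x; split; [left | rewrite big_nil maxn0].
case: (IH isT) => z [h1 h2]; rewrite h2.
case: (leqP (F z) (F x)) => h.
  by exists x; split; [left|].
by exists z; split; [right|].
Qed.
End InLemmas.

Section AlgEv.
Variables (R : realFieldType) (n : nat) (L0 : seq 'I_n) (sigma : seq (request R n)).
Variable r0 : request R n.
Local Notation req := (request R n).

Definition ii (LL : nat -> seq 'I_n) (xx : nat -> 'I_n) k := pos (LL k) (xx k).
Definition pp LL xx k := minn (2 * ii LL xx k - 1) n.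
Definition cst LL xx k := pp LL xx k + (ii LL xx k).-1.

Definition ev_ok m (tt : nat -> R) LL xx (rr : nat -> req) :=
  [/\ LL 0 = L0,
      forall k, k < m -> LL k.+1 = mtf (xx k) (LL k),
      forall k, k < m -> [/\ forall P, all P sigma -> P (rr k),
                            elem (rr k) = xx k & dl (rr k) = tt k],
      forall k k', k < k' -> k' < m -> (tt k < tt k')%R &
      forall k k', k' < k -> k < m -> (arr (rr k) <= tt k')%R ->
                   pp LL xx k' < pos (LL k') (xx k)].

Definition Inv (s : seq R) (st : astate R n) := exists m tt LL xx rr,
  [/\ ev_ok m tt LL xx rr, aL st = LL m,
      sched_cost (asched st) = \sum_(k < m) cst LL xx k,
      size (aserved st) = size sigma &
      (forall k, k < m -> tt k \in s) /\
      (forall rb, List.In rb (zip sigma (aserved st)) -> rb.2 = false ->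
        forall k, k < m ->
        ~~ ((arr rb.1 <= tt k)%R && (pos (LL k) (elem rb.1) <= pp LL xx k)))].

Lemma ev_perm m tt LL xx rr : ev_ok m tt LL xx rr -> perm_eq L0 (enum 'I_n) ->
  forall k, k <= m -> perm_eq (LL k) (enum 'I_n).
Proof.
case=> h0 hS _ _ _ p0; elim=> [|k IH] km; first by rewrite h0.
have pk := IH (ltnW km).
have u := perm_enum_uniq pk; have mm := perm_enum_mem (xx k) pk.
by rewrite hS //; exact: (perm_trans (perm_mtf u mm) pk).
Qed.

Lemma sorted_rcons_le (s : seq R) t : sorted (fun x y : R => (x <= y)%R) (rcons s t) ->
  all (fun y => (y <= t)%R) s.
Proof.
elim: s => [|y s IH] //= hp.
have := order_path_min (@le_trans _ R) hp; rewrite all_rcons => /andP [yt _].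
by rewrite yt IH //; exact: path_sorted hp.
Qed.

Lemma sorted_rcons_lt (s : seq R) t x : sorted (fun x y : R => (x <= y)%R) (rcons s t) ->
  uniq (rcons s t) -> x \in s -> (x < t)%R.
Proof.
move=> so un xs.
have := sorted_rcons_le so.
move/allP/(_ x xs); rewrite le_eqVlt => /orP [/eqP e|//].
by move: un; rewrite rcons_uniq -e xs.
Qed.

Lemma Inv_step s st t : perm_eq L0 (enum 'I_n) ->
  sorted (fun x y : R => (x <= y)%R) (rcons s t) -> uniq (rcons s t) ->
  Inv s st -> Inv (rcons s t) (alg_step sigma st t).
Proof.
move=> p0 so un [m [tt [LL [xx [rr [ok hL hc hs [hts hfl]]]]]]].
have ok' := ok; case: ok' => h0 hS hR hT hN.
have pL : perm_eq (aL st) (enum 'I_n) by rewrite hL; exact: ev_perm ok p0 m (leqnn m).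
rewrite /alg_step /=.
case: ifP => [_ | trigne].
  exists m, tt, LL, xx, rr; split=> //; split=> // k km.
  by rewrite mem_rcons in_cons hts ?orbT.
set ps := zip sigma (aserved st).
set trig := [seq rb <- ps | _].
have [rb0 [inT himax]] :=
  bigmax_In (fun rb : req * bool => pos (aL st) (elem rb.1)) (negbT trigne).
rewrite himax hL.
have [inP /andP [/andP [arr0 fl0] /eqP dl0]] := In_filter inT.
move/negbTE: fl0 => fl0.
set x := elem rb0.1.
have uL : uniq (LL m) by rewrite -hL; exact: perm_enum_uniq pL.
have xL : x \in LL m by rewrite -hL; exact: perm_enum_mem.
pose tt' := fun k => if k == m then t else tt k.
pose LL' := fun k => if k == m.+1 then mtf x (LL m) else LL k.
pose xx' := fun k => if k == m then x else xx k.
pose rr' := fun k => if k == m then rb0.1 else rr k.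
have eL : forall k, k <= m -> LL' k = LL k.
  by move=> k km; rewrite /LL'; case: eqP => // e; lia.
have ex : forall k, k < m -> xx' k = xx k.
  by move=> k km; rewrite /xx'; case: eqP => // e; lia.
have et : forall k, k < m -> tt' k = tt k.
  by move=> k km; rewrite /tt'; case: eqP => // e; lia.
have er : forall k, k < m -> rr' k = rr k.
  by move=> k km; rewrite /rr'; case: eqP => // e; lia.
have eii : forall k, k < m -> ii LL' xx' k = ii LL xx k.
  by move=> k km; rewrite /ii eL ?ex // ltnW.
have epp : forall k, k < m -> pp LL' xx' k = pp LL xx k.
  by move=> k km; rewrite /pp eii.
have eiim : ii LL' xx' m = pos (LL m) x by rewrite /ii eL // /xx' eqxx.
have eppm : pp LL' xx' m = minn (2 * pos (LL m) x - 1) n by rewrite /pp eiim.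
exists m.+1, tt', LL', xx', rr'; split.
- split.
  + by rewrite eL.
  + move=> k; rewrite ltnS leq_eqVlt => /orP [/eqP ->|km].
      by rewrite (eL m) // /LL' /xx' !eqxx.
    by rewrite eL // ex // eL ?(ltnW km) // hS.
  + move=> k; rewrite ltnS leq_eqVlt => /orP [/eqP ->|km].
      rewrite /rr' /xx' /tt' eqxx; split=> // P aP.
      exact: (In_all (all_zip1 (aserved st) aP) inP).
    by rewrite er // ex // et //; apply: hR.
  + move=> k k' kk'; rewrite ltnS leq_eqVlt => /orP [/eqP ek'|km].
      subst k'; rewrite /tt' eqxx (_ : (k == m) = false); last by apply/negbTE; rewrite neq_ltn kk'.
      by apply: (sorted_rcons_lt so un); apply: hts.
    by rewrite !et //; [apply: hT | apply: ltn_trans km].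
  + move=> k k' k'k; rewrite ltnS leq_eqVlt => /orP [/eqP ek|km].
      subst k; have k'm := k'k.
      rewrite /rr' eqxx et // epp // eL ?(ltnW k'm) // /xx' eqxx => ha.
      have := hfl _ inP fl0 k' k'm; rewrite ha /= -ltnNge; exact.
    have k'm := ltn_trans k'k km.
    rewrite er // et // epp // eL ?(ltnW k'm) // ex //; exact: hN.
- rewrite alg_mv_mtf // /LL' eqxx //.
- rewrite /sched_cost big_cat big_cons big_map /= -/(sched_cost (asched st)) hc.
  rewrite big_map /= sum1_size size_rev size_iota big_ord_recr /=.
  congr (_ + _).
    by apply: eq_bigr => k _; rewrite /cst epp // eii.
  by rewrite /cst eppm eiim.
- by rewrite /= size_map size_zip hs minnn.
- split.
    move=> k; rewrite ltnS leq_eqVlt => /orP [/eqP ->|km].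
      by rewrite /tt' eqxx mem_rcons mem_head.
    by rewrite et // mem_rcons in_cons hts ?orbT.
  move=> rb; rewrite /= /ps. rewrite (@zip_map_zip _ _ _ sigma (aserved st)); last by rewrite hs. move=> H; have [rb1 [in1 e]] := In_map H; subst rb => /= /negbT /norP [f1 f2] k.
  move/negbTE: f1 => f1.
  rewrite ltnS leq_eqVlt => /orP [/eqP ->|km].
    by rewrite /tt' eqxx eppm eL // -/x; rewrite f1 /= andbT in f2.
  by rewrite et // epp // eL ?(ltnW km) //; exact: hfl.
Qed.

Lemma sorted_rcons_sorted (s : seq R) t :
  sorted (fun x y : R => (x <= y)%R) (rcons s t) -> sorted (fun x y : R => (x <= y)%R) s.
Proof. case: s => [|y s] //=; rewrite rcons_path => /andP []. done. Qed.

Lemma Inv_fold s : perm_eq L0 (enum 'I_n) ->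
  sorted (fun x y : R => (x <= y)%R) s -> uniq s ->
  Inv s (foldl (alg_step sigma) (AState L0 (nseq (size sigma) false) [::]) s).
Proof.
move=> p0; elim/last_ind: s => [|s t IH] so un.
  exists 0, (fun _ => 0%R), (fun _ => L0), (fun _ => elem r0), (fun _ => r0).
  split; [by split | by [] | | by rewrite /= size_nseq | by split].
  by rewrite big_ord0 /sched_cost big_nil.
rewrite foldl_rcons; apply: Inv_step => //.
apply: IH; first exact: sorted_rcons_sorted so.
by move: un; rewrite rcons_uniq => /andP [].
Qed.

Lemma alg_events : perm_eq L0 (enum 'I_n) ->
  exists m tt LL xx rr, ev_ok m tt LL xx rr /\
    alg_cost L0 sigma = \sum_(k < m) cst LL xx k.
Proof.
move=> p0.
have so := sort_sorted (@le_total _ R) (undup (map (@dl R n) sigma)).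
have un : uniq (sort (fun x y : R => (x <= y)%R) (undup (map (@dl R n) sigma))).
  by rewrite sort_uniq undup_uniq.
have [m [tt [LL [xx [rr [ok _ hc _ _]]]]]] := Inv_fold p0 so un.
by exists m, tt, LL, xx, rr; split.
Qed.

End AlgEv.

Section Opt.
Variables (R : realFieldType) (n : nat) (L0 : seq 'I_n) (sigma : seq (request R n)).
Variable S : sched R.
Hypothesis p0 : perm_eq L0 (enum 'I_n).
Hypothesis fe : feasible L0 sigma S.

Local Notation N := (size S).
Definition act u := (nth (0%R, Access 0) S u).2.
Definition time u := (nth (0%R, Access 0) S u).1.
Definition lb u := list_before L0 S u.
Definition sw u := if act u is Swap _ then 1 else 0.
Definition Jv u := if act u is Access J then J else 0.
Definition mb u (z : 'I_n) := movesback (lb u) (act u) z.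

Lemma lb_step u : lb u.+1 = apply_act (lb u) (act u).
Proof.
rewrite /lb /list_before /act; case: (ltnP u N) => h.
  by rewrite (take_nth (0%R, Access 0) h) map_rcons foldl_rcons.
by rewrite !take_oversize ?(leqW h) // nth_default.
Qed.

Lemma lb_perm u : perm_eq (lb u) (enum 'I_n).
Proof.
elim: u => [|u IH]; first by rewrite /lb /list_before take0.
by rewrite lb_step; apply: perm_trans (perm_apply_act _ _) IH.
Qed.

Lemma inv_drift A a b : a <= b ->
  invs A (lb b) <= invs A (lb a) + \sum_(a <= u < b) sw u.
Proof.
elim: b => [|b IH] ab.
  by rewrite (_ : a = 0) ?big_geq ?addn0 //; lia.
case: (eqVneq a b.+1) => [->|ne]; first by rewrite big_geq ?addn0.
have ab' : a <= b by lia.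
rewrite big_nat_recr //= lb_step.
apply: leq_trans (inv_apply _ _ (perm_enum_uniq (lb_perm b))) _.
rewrite /sw addnA leq_add2r; exact: IH.
Qed.

Lemma idx_drift z a b : a <= b ->
  index z (lb b) <= index z (lb a) + \sum_(a <= u < b) mb u z.
Proof.
elim: b => [|b IH] ab.
  by rewrite (_ : a = 0) ?big_geq ?addn0 //; lia.
case: (eqVneq a b.+1) => [->|ne]; first by rewrite big_geq ?addn0.
have ab' : a <= b by lia.
rewrite big_nat_recr //= lb_step.
apply: leq_trans (idx_apply _ _ _) _.
rewrite /mb addnA leq_add2r; exact: IH.
Qed.

Lemma cost_split : sched_cost S = \sum_(u < N) (sw u + Jv u).
Proof.
rewrite /sched_cost (big_nth (0%R, Access 0)) big_mkord.
by apply: eq_bigr => u _; rewrite /sw /Jv /act; case: (nth _ S u).2.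
Qed.

Lemma time_mono u v : u <= v -> v < N -> (time u <= time v)%R.
Proof.
move=> uv vN; case/andP: fe => so _.
have := le_sorted_leq_nth 0%R so; rewrite size_map => h.
have := h u v; rewrite !inE !(nth_map (0%R, Access 0)) ?(leq_ltn_trans uv vN) //.
by move=> /(_ isT vN uv).
Qed.

Lemma sum_nat_range a b (F : nat -> nat) : a <= b -> b <= N ->
  \sum_(a <= u < b) F u = \sum_(u < N) ((a <= u) && (u < b)) * F u.
Proof.
move=> ab bN; rewrite -(big_mkord xpredT (fun u => ((a <= u) && (u < b)) * F u)).
symmetry; rewrite (big_cat_nat (leq0n a) (leq_trans ab bN)) /=.
rewrite (big_cat_nat ab bN) /=.
rewrite [X in X + _]big_nat_cond [X in X + _]big1 ?add0n; last first.
  by move=> u /andP [/andP [_ ua] _]; rewrite (_ : a <= u = false) //; lia.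
rewrite [X in _ + X]big_nat_cond [X in _ + X]big1 ?addn0; last first.
  by move=> u /andP [/andP [bu _] _]; rewrite (_ : u < b = false) ?andbF //; lia.
rewrite big_nat_cond [RHS]big_nat_cond; apply: eq_bigr => u /andP [-> _]; by rewrite mul1n.
Qed.


Lemma at_most_one (k0 : nat) (c : 'I_k0 -> bool) :
  (forall k k', c k -> c k' -> k = k') -> \sum_(k < k0) (c k : nat) <= 1.
Proof.
move=> H; case: (pickP c) => [k ck|none].
  rewrite (bigD1 k) //= ck big1 // => k' /negPf k'k.
  by case ck': (c k') => //; move: (H _ _ ck ck') => e; rewrite e eqxx in k'k.
by rewrite big1 // => k _; rewrite none.
Qed.

Lemma sum_pick_nat (s : nat) (c : nat) : s < N ->
  \sum_(u < N) (s == u) * c = c.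
Proof.
move=> sN; rewrite (bigD1 (Ordinal sN)) //= eqxx mul1n big1 ?addn0 // => u.
by rewrite -val_eqE /= eq_sym => /negPf ->.
Qed.

Lemma pos_le_n (L : seq 'I_n) z : perm_eq L (enum 'I_n) -> pos L z <= n.
Proof.
move=> pL; have h1 : index z L < size L by rewrite index_mem; exact: perm_enum_mem.
by move: h1; rewrite (perm_enum_size pL).
Qed.

Variables (m : nat) (tt : nat -> R) (LL : nat -> seq 'I_n) (xx : nat -> 'I_n)
  (rr : nat -> request R n).
Hypothesis ok : ev_ok L0 sigma m tt LL xx rr.

Definition sg k := find (serves_at L0 S (rr k)) (iota 0 N).
Definition PP k := find (fun e : R * action => (tt k < e.1)%R) S.

Lemma LL_perm k : k <= m -> perm_eq (LL k) (enum 'I_n).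
Proof. have h := ev_perm ok p0; exact: h. Qed.

Lemma ii_pp k : k <= m -> 0 < ii LL xx k <= n /\ ii LL xx k <= pp LL xx k.
Proof.
move=> km; have := pos_le_n (xx k) (LL_perm km).
rewrite /pp /ii /pos; lia.
Qed.

Lemma sg_spec k : k < m ->
  [/\ sg k < N, (arr (rr k) <= time (sg k))%R, (time (sg k) <= tt k)%R &
      pos (lb (sg k)) (xx k) <= Jv (sg k)].
Proof.
move=> km; case: ok => _ _ hR _ _; have [hP he hd] := hR k km.
have hs : has (serves_at L0 S (rr k)) (iota 0 N).
  apply: (hP (fun r => has (serves_at L0 S r) (iota 0 N))).
  by case/andP: fe.
have sN : sg k < N by rewrite /sg -[X in _ < X](size_iota 0) -has_find.
have := nth_find 0 hs; rewrite -/(sg k) nth_iota // add0n.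
rewrite /serves_at /time /Jv /act /lb; case e: (nth _ S _) => [tm a] /and3P [h1 h2 h3].
split=> //; first by rewrite -hd.
by case: a e h3 => // J e; rewrite he.
Qed.

Lemma PP_le k : PP k <= N.
Proof. exact: find_size. Qed.

Lemma PP_time k u : u < PP k -> (time u <= tt k)%R.
Proof. by move=> h; have := before_find (0%R, Access 0) h; rewrite /time leNgt => ->. Qed.

Lemma PP_after k : PP k < N -> (tt k < time (PP k))%R.
Proof.
move=> h; have hs : has (fun e : R * action => (tt k < e.1)%R) S by rewrite has_find.
exact: (nth_find (0%R, Access 0) hs).
Qed.

Lemma sg_lt_PP k : k < m -> sg k < PP k.
Proof.
move=> km; have [sN h1 h2 _] := sg_spec km.
rewrite ltnNge; apply/negP => h.
have h3 := PP_after (leq_ltn_trans h sN).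
have h4 := time_mono h sN.
by have := lt_le_trans h3 (le_trans h4 h2); rewrite ltxx.
Qed.

Lemma PP_mono k k' : k <= k' -> k' < m -> PP k <= PP k'.
Proof.
rewrite leq_eqVlt => /orP [/eqP ->|kk'] k'm //.
case: ok => _ _ _ hT _; have := hT _ _ kk' k'm => ht.
rewrite leqNgt; apply/negP => h.
have h1 := PP_after (leq_trans h (PP_le k)).
have h2 := PP_time h.
by have := lt_trans ht (lt_le_trans h1 h2); rewrite ltxx.
Qed.

Lemma event_ineq k : k < m ->
  cst LL xx k + 6 * invs (LL k.+1) (lb (PP k)) + (3 * ii LL xx k + 8) <=
  6 * invs (LL k) (lb (PP k)) + 12 * minn (ii LL xx k) (pos (lb (PP k)) (xx k)).
Proof.
move=> km; case: ok => _ hS _ _ _.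
have [h1 h2 h3] := inv_mtf (xx k) (LL_perm (ltnW km)) (lb_perm (PP k)).
rewrite hS //.
move: h1 h2 h3.
move: (invs (mtf (xx k) (LL k)) _) (invs (LL k) _) (\sum_(q < n) _) (\sum_(q < n) _) => I1 I0 b a.
rewrite /cst /pp /ii /pos; lia.
Qed.

Definition Q k := if k is k'.+1 then PP k' else 0.

Lemma Q_le_PP k : k < m -> Q k <= PP k.
Proof. by case: k => [|k] //= km; apply: PP_mono => //. Qed.

Lemma potential_claim m' : m' <= m ->
  \sum_(k < m') (cst LL xx k + (3 * ii LL xx k + 8)) + 6 * invs (LL m') (lb (Q m')) <=
  6 * \sum_(0 <= u < Q m') sw u +
  \sum_(k < m') 12 * minn (ii LL xx k) (pos (lb (PP k)) (xx k)).
Proof.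
elim: m' => [|k IH] km.
  case: ok => h0 _ _ _ _.
  by rewrite !big_ord0 /= h0 /lb /list_before take0 /= inv_refl.
have kl : k < m := km.
have := IH (ltnW km); rewrite !big_ord_recr /=.
have hd := inv_drift (LL k) (Q_le_PP kl).
have he := event_ineq kl.
rewrite (big_cat_nat (leq0n (Q k)) (Q_le_PP kl)) /=.
move: hd he.
move: (invs (LL k) (lb (Q k))) (invs (LL k) (lb (PP k))) (invs (LL k.+1) (lb (PP k)))
      (\sum_(Q k <= u < PP k) sw u) (\sum_(0 <= u < Q k) sw u)
      (\sum_(i < k) (cst LL xx i + (3 * ii LL xx i + 8)))
      (\sum_(i < k) 12 * minn (ii LL xx i) (pos (lb (PP i)) (xx i))) => a b c d e f g.
lia.
Qed.


Definition back k := \sum_(sg k <= u < PP k) mb u (xx k).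

Lemma jj_bound k : k < m ->
  pos (lb (PP k)) (xx k) <= Jv (sg k) + back k.
Proof.
move=> km; have [_ _ _ hJ] := sg_spec km.
have := idx_drift (xx k) (ltnW (sg_lt_PP km)).
move: hJ; rewrite /pos /back; lia.
Qed.

Lemma pos_mono k k' : k <= k' -> k' < m ->
  (forall e, k <= e -> e < k' -> pp LL xx e < pos (LL e) (xx k')) ->
  pos (LL k) (xx k') <= pos (LL k') (xx k').
Proof.
move=> kk' k'm H.
suff : forall d, k + d <= k' -> pos (LL k) (xx k') <= pos (LL (k + d)) (xx k').
  by move=> /(_ (k' - k)); rewrite subnKC //; apply.
elim=> [|d IH] hd; first by rewrite addn0.
have hd' : k + d <= k' by lia.
apply: leq_trans (IH hd') _.
have em : k + d < m by lia.
case: ok => _ hS _ _ _.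
rewrite addnS hS // /pos ltnS.
apply: mtf_idx_ge; first exact: perm_enum_uniq (LL_perm (ltnW em)).
apply/eqP => e.
have hd2 : k + d < k' by lia.
have := H (k + d) (leq_addr _ _) hd2; rewrite e.
have [_ hp] := ii_pp (ltnW em); move: hp; rewrite /ii; lia.
Qed.

Lemma doubling k k' : k < k' -> k' < m -> sg k = sg k' ->
  2 * ii LL xx k <= ii LL xx k'.
Proof.
move=> kk' k'm esg.
have km : k < m := ltn_trans kk' k'm.
case: ok => _ _ _ hT hN.
have [_ a1 _ _] := sg_spec k'm.
have [_ _ a2 _] := sg_spec km.
have ha : (arr (rr k') <= tt k)%R by rewrite esg in a2; exact: le_trans a1 a2.
have hm := @pos_mono k k' (ltnW kk') k'm.
have H : forall e, k <= e -> e < k' -> pp LL xx e < pos (LL e) (xx k').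
  move=> e ke ek'; apply: hN => //.
  apply: (le_trans ha); move: ke; rewrite leq_eqVlt => /orP [/eqP ->|kle] //.
  by apply: ltW; apply: hT => //; apply: ltn_trans ek' k'm.
have h1 := H k (leqnn k) kk'.
have h2 := hm H.
have h3 := pos_le_n (xx k') (LL_perm (ltnW km)).
move: h1 h2 h3; rewrite /pp /ii; lia.
Qed.

Lemma back_total : \sum_(k < m) back k <= \sum_(u < N) sw u.
Proof.
rewrite /back.
under eq_bigr => k _ do rewrite (sum_nat_range _ (ltnW (sg_lt_PP (ltn_ord k))) (PP_le k)).
rewrite exchange_big /=; apply: leq_sum => u _.
under eq_bigr => k _ do rewrite !mulnb.
rewrite /sw /mb; case ea: (act u) => [i|j].
  by rewrite big1 // => k _; rewrite andbF.
apply: at_most_one => k k'.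
move=> /andP [/andP [s1 p1] m1] /andP [/andP [s2 p2] m2].
have ex := movesback_uniq m1 m2.
suff : forall a b : 'I_m, a < b -> sg b <= u -> u < PP a -> xx a = xx b -> False.
  move=> H; case: (ltngtP k k') => [h|h|/val_inj] //.
    by case: (H _ _ h s2 p1 ex).
  by case: (H _ _ h s1 p2 (esym ex)).
move=> a b ab sb pa exab.
have bm := ltn_ord b; have am := ltn_ord a.
case: ok => _ _ _ hT hN.
have [_ a1 _ _] := sg_spec bm.
have uN : u < N := leq_trans pa (PP_le a).
have h1 := time_mono sb uN.
have h2 := PP_time pa.
have := hN b a ab bm (le_trans a1 (le_trans h1 h2)).
rewrite -exab; have [_ hp] := ii_pp (ltnW am); move: hp; rewrite /ii; lia.
Qed.

Lemma grouping :
  \sum_(k < m) 12 * minn (ii LL xx k) (Jv (sg k)) <=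
  \sum_(k < m) (3 * ii LL xx k + 8) + 24 * \sum_(u < N) Jv u.
Proof.
have e1 : forall F : nat -> nat, \sum_(k < m) F k =
    \sum_(u < N) \sum_(k < m) (sg k == u) * F k.
  move=> F; rewrite exchange_big /=; apply: eq_bigr => k _.
  by have [sN _ _ _] := sg_spec (ltn_ord k); rewrite sum_pick_nat.
rewrite (e1 (fun k => 12 * minn (ii LL xx k) (Jv (sg k)))) (e1 (fun k => 3 * ii LL xx k + 8)).
rewrite big_distrr -big_split /=.
apply: leq_sum => u _.
rewrite (eq_bigr (fun k : 'I_m => (sg k == u) * (12 * minn (ii LL xx k) (Jv u)))); last first.
  by move=> k _; case: eqP => [->|].
apply: (@group_bound (fun k => ii LL xx k) (fun k => sg k == u) (Jv u) m).
move=> k k' kk' k'm /eqP e /eqP e'.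
by apply: doubling => //; rewrite e e'.
Qed.

Lemma opt_bound : \sum_(k < m) cst LL xx k <= 24 * sched_cost S.
Proof.
have h1 := potential_claim (leqnn m).
have h2 : \sum_(0 <= u < Q m) sw u <= \sum_(u < N) sw u.
  have QN : Q m <= N by case: (m) => [|k] //=; apply: PP_le.
  rewrite -(big_mkord xpredT sw) (big_cat_nat (leq0n _) QN) /=; apply: leq_addr.
have h3 : \sum_(k < m) 12 * minn (ii LL xx k) (pos (lb (PP k)) (xx k)) <=
          \sum_(k < m) 12 * minn (ii LL xx k) (Jv (sg k)) + 12 * \sum_(k < m) back k.
  rewrite big_distrr -big_split /=; apply: leq_sum => k _.
  have := jj_bound (ltn_ord k); lia.
have h4 := back_total.
have h5 := grouping.
rewrite big_split /= in h1.
rewrite cost_split [in X in _ <= X]big_split /=.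
move: h1 h2 h3 h4 h5.
move: (\sum_(k < m) cst LL xx k) (\sum_(i < m) (3 * ii LL xx i + 8))
  (6 * invs (LL m) (lb (Q m))) (\sum_(0 <= u < Q m) sw u) (\sum_(u < N) sw u)
  (\sum_(k < m) 12 * minn (ii LL xx k) (pos (lb (PP k)) (xx k)))
  (\sum_(k < m) 12 * minn (ii LL xx k) (Jv (sg k))) (\sum_(k < m) back k)
  (\sum_(u < N) Jv u) => a b c d e f g h i.
lia.
Qed.

End Opt.

End Aux.
Import Aux.

Theorem theorem1 (R : realFieldType) (n : nat) (L0 : seq 'I_n)
    (sigma : seq (request R n)) (S : sched R) :
  perm_eq L0 (enum 'I_n) ->
  all (fun r => (arr r <= dl r)%R) sigma ->
  feasible L0 sigma S ->
  (alg_cost L0 sigma <= 24 * sched_cost S)%N.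
Proof.
move=> p0 _ fe.
case E: sigma => [|r0 s].
  by rewrite /alg_cost /alg_run /= /sched_cost big_nil.
rewrite -E.
have [m [tt [LL [xx [rr [ok hc]]]]]] := @alg_events R n L0 sigma r0 p0.
rewrite hc; exact: (opt_bound p0 fe ok).
Qed.
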